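(* Let $G=(V,E,w)$ be a weighted graph with no isolated vertices, let $s\in[0,1]^V$, let $k\in\mathbb{N}$, and let $\alpha,\beta\ge 0$ be constants, not both zero. Consider the objective $F(s') := \alpha\, D(z') + \beta\, P(z')$ where $z'=(I+L)^{-1}s'$. Let $s'$ be a maximizer of $F$ over the feasible set $\{s'\in[0,1]^V : \|s'-s\|_0\le k\}$. Then for every $v\in V$, if $s'_v\neq s_v$ then $s'_v\in\{0,1\}$. (In particular this applies to maximizing disagreement alone, polarization alone, or $P+\lambda\frac{n}{m}D$ for $\lambda\ge 0$.)
   Context: $G=(V,E,w)$ is a weighted undirected graph on $n=|V|$ vertices with $m=|E|$ edges, with weights $w_{u,v}\in(0,1]$ for $(u,v)\in E$ and $w_{u,v}=0$ otherwise (and $w_{v,v}=0$). $L=\mathrm{Diag}(d)-A$ is the weighted Laplacian, where $A_{u,v}=w_{u,v}$ and $d_v=\sum_u w_{v,u}$. Given innate opinions $s\in[0,1]^V$, the (Friedkin–Johnsen) equilibrium opinions are $z=(I+L)^{-1}s$. Disagreement is $D(z)=\sum_{(u,v)\in E} w_{u,v}(z_u-z_v)^2$ and polarization is $P(z)=\sum_{v\in V}(z_v-\bar z)^2$ with $\bar z=\frac1n\sum_v z_v$. $\|x\|_0$ denotes the number of nonzero coordinates of $x$. *)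

(* Defs.v *)
From HB Require Import structures.
From mathcomp Require Import all_boot all_order all_algebra.
Set Implicit Arguments. Unset Strict Implicit. Unset Printing Implicit Defensive.
Import Order.TTheory GRing.Theory Num.Theory.
Local Open Scope ring_scope.

Definition degree (R : realFieldType) (n : nat) (A : 'M[R]_n) (v : 'I_n) : R :=
  \sum_(u < n) A v u.

Definition laplacian (R : realFieldType) (n : nat) (A : 'M[R]_n) : 'M[R]_n :=
  \matrix_(i, j) ((i == j)%:R * degree A i) - A.

Definition equilibrium (R : realFieldType) (n : nat) (A : 'M[R]_n) (s : 'cV[R]_n)
  : 'cV[R]_n := invmx (1%:M + laplacian A) *m s.

(* D(z) = sum over edges {u,v} (each unordered pair once) w_{u,v} (z_u - z_v)^2;
   non-edges have weight 0 so summing over all pairs u < v is the same. *)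
Definition disagreement (R : realFieldType) (n : nat) (A : 'M[R]_n) (z : 'cV[R]_n)
  : R := \sum_(u < n) \sum_(v < n | (u < v)%N) A u v * (z u 0 - z v 0) ^+ 2.

Definition polarization (R : realFieldType) (n : nat) (z : 'cV[R]_n) : R :=
  \sum_(v < n) (z v 0 - (\sum_(u < n) z u 0) / n%:R) ^+ 2.

Definition objective (R : realFieldType) (n : nat) (A : 'M[R]_n) (alpha beta : R)
  (s' : 'cV[R]_n) : R :=
  alpha * disagreement A (equilibrium A s') + beta * polarization (equilibrium A s').

Definition l0dist (R : realFieldType) (n : nat) (s s' : 'cV[R]_n) : nat :=
  #|[set v : 'I_n | s' v 0 != s v 0]|.

Definition in01 (R : realFieldType) (n : nat) (s : 'cV[R]_n) : Prop :=
  forall v : 'I_n, 0 <= s v 0 <= 1.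

Definition feasible (R : realFieldType) (n : nat) (s : 'cV[R]_n) (k : nat)
  (s' : 'cV[R]_n) : Prop := in01 s' /\ (l0dist s s' <= k)%N.

(* weighted undirected graph: symmetric, zero diagonal, weights in [0,1]
   (edges are exactly the pairs with positive weight, which then lie in (0,1]) *)
Definition weighted_graph (R : realFieldType) (n : nat) (A : 'M[R]_n) : Prop :=
  (forall u v, A u v = A v u) /\ (forall v, A v v = 0) /\
  (forall u v, 0 <= A u v <= 1).

Definition no_isolated (R : realFieldType) (n : nat) (A : 'M[R]_n) : Prop :=
  forall v : 'I_n, exists u : 'I_n, 0 < A v u.

(* Main.v *)
Require Import Defs.
From HB Require Import structures.
From mathcomp Require Import all_boot all_order all_algebra.
From mathcomp Require Import ring lra.
Import Order.TTheory GRing.Theory Num.Theory.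
Local Open Scope ring_scope.

Lemma lapij (R : realFieldType) (n : nat) (A : 'M[R]_n) i j :
  laplacian A i j = (i == j)%:R * degree A i - A i j.
Proof. by rewrite /laplacian !mxE. Qed.

Lemma lapE (R : realFieldType) (n : nat) (A : 'M[R]_n) (x : 'cV[R]_n) i :
  (laplacian A *m x) i 0 = \sum_j A i j * (x i 0 - x j 0).
Proof.
rewrite mxE; under eq_bigr do rewrite lapij mulrBl.
rewrite sumrB (bigD1 i) //= big1; last first.
  by move=> j /negbTE hj; rewrite eq_sym hj mul0r mul0r.
rewrite eqxx mul1r addr0 /degree big_distrl /= -sumrB.
by apply: eq_bigr => j _; rewrite mulrBr.
Qed.

Lemma MxE (R : realFieldType) (n : nat) (A : 'M[R]_n) (x : 'cV[R]_n) i :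
  ((1%:M + laplacian A) *m x) i 0 = x i 0 + \sum_j A i j * (x i 0 - x j 0).
Proof. by rewrite mulmxDl mul1mx mxE lapE. Qed.

Lemma ker_le0 (R : realFieldType) (n : nat) (A : 'M[R]_n)
  (hG : weighted_graph A) (y : 'cV[R]_n) :
  (1%:M + laplacian A) *m y = 0 -> forall j, y j 0 <= 0.
Proof.
move=> hy j.
case: (@arg_maxP _ _ _ j predT (fun i => y i 0)) => // i _ hi.
have := congr1 (fun M : 'cV[R]_n => M i 0) hy; rewrite /= MxE mxE => h.
apply: le_trans (hi j isT) _.
have : 0 <= \sum_j0 A i j0 * (y i 0 - y j0 0).
  apply: sumr_ge0 => k _; apply: mulr_ge0.
    by case: hG => _ [_ h3]; case/andP: (h3 i k).
  by rewrite subr_ge0; apply: hi.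
lra.
Qed.

Lemma M_unit (R : realFieldType) (n : nat) (A : 'M[R]_n)
  (hG : weighted_graph A) : (1%:M + laplacian A) \in unitmx.
Proof.
rewrite unitmxE unitfE -det_tr; apply/negP => /det0P [u hu0 hu].
have hy : (1%:M + laplacian A) *m u^T = 0.
  by rewrite -[1%:M + _]trmxK -trmx_mul hu trmx0.
have h1 := @ker_le0 _ _ _ hG _ hy.
have hy' : (1%:M + laplacian A) *m (- u^T) = 0 by rewrite mulmxN hy oppr0.
have h2 := @ker_le0 _ _ _ hG _ hy'.
move/eqP: hu0; apply; apply/matrixP => i j; rewrite !mxE.
have := h1 j; have := h2 j; rewrite !mxE [i]ord1 => a b; lra.
Qed.

Lemma addsE (R : realFieldType) (n : nat) (z x : 'cV[R]_n) (t : R) i :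
  (z + t *: x) i 0 = z i 0 + t * x i 0.
Proof. by rewrite !mxE. Qed.

Lemma D_par (R : realFieldType) (n : nat) (A : 'M[R]_n) (z x : 'cV[R]_n) (t : R) :
  disagreement A (z + t *: x) + disagreement A (z + (- t) *: x) =
  2 * disagreement A z + 2 * t ^+ 2 * disagreement A x.
Proof.
rewrite /disagreement -big_split !mulr_sumr -big_split; apply: eq_bigr => u _.
rewrite -big_split !mulr_sumr -big_split; apply: eq_bigr => w _.
rewrite /= !addsE; ring.
Qed.

Lemma sum_adds (R : realFieldType) (n : nat) (z x : 'cV[R]_n) (t : R) :
  \sum_(u < n) (z + t *: x) u 0 = \sum_(u < n) z u 0 + t * \sum_(u < n) x u 0.
Proof.
by rewrite mulr_sumr -big_split; apply: eq_bigr => u _; rewrite addsE.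
Qed.

Lemma P_par (R : realFieldType) (n : nat) (z x : 'cV[R]_n) (t : R) :
  polarization (z + t *: x) + polarization (z + (- t) *: x) =
  2 * polarization z + 2 * t ^+ 2 * polarization x.
Proof.
rewrite /polarization !sum_adds.
set Sz := \sum_(u < n) z u 0; set Sx := \sum_(u < n) x u 0; clearbody Sz Sx.
rewrite -big_split !mulr_sumr -big_split; apply: eq_bigr => u _.
rewrite /= !addsE; ring.

Qed.

Lemma equil_adds (R : realFieldType) (n : nat) (A : 'M[R]_n) (z x : 'cV[R]_n) (t : R) :
  equilibrium A (z + t *: x) = equilibrium A z + t *: equilibrium A x.
Proof. by rewrite /equilibrium mulmxDr scalemxAr. Qed.

Lemma obj_par (R : realFieldType) (n : nat) (A : 'M[R]_n) (al be : R) (z x : 'cV[R]_n) (t : R) :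
  objective A al be (z + t *: x) + objective A al be (z + (- t) *: x) =
  2 * objective A al be z + 2 * t ^+ 2 *
     (al * disagreement A (equilibrium A x) + be * polarization (equilibrium A x)).
Proof.
rewrite /objective !equil_adds.
have h1 := @D_par _ _ A (equilibrium A z) (equilibrium A x) t.
have h2 := @P_par _ _ (equilibrium A z) (equilibrium A x) t.
set d1 := disagreement A (_ + t *: _) in h1 *.
set d2 := disagreement A (_ + (- t) *: _) in h1 *.
set p1 := polarization (_ + t *: _) in h2 *.
set p2 := polarization (_ + (- t) *: _) in h2 *.
transitivity (al * (d1 + d2) + be * (p1 + p2)); first ring.
rewrite h1 h2; ring.
Qed.

Lemma key (R : realFieldType) (n : nat) (A : 'M[R]_n)
  (hG : weighted_graph A) (hiso : no_isolated A) (v : 'I_n) :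
  ~ (forall u w, 0 < A u w -> equilibrium A (delta_mx v 0) u 0 = equilibrium A (delta_mx v 0) w 0).
Proof.
set x := equilibrium A _ => hc.
have hM : (1%:M + laplacian A) *m x = delta_mx v 0.
  by rewrite /x /equilibrium mulmxA mulmxV ?mul1mx // M_unit.
have hx : forall i, x i 0 = delta_mx v (0 : 'I_1) i 0.
  move=> i; rewrite -hM MxE big1 ?addr0 // => j _.
  case: hG => _ [_ h3]; case/andP: (h3 i j) => h0 _.
  rewrite le_eqVlt in h0; case/orP: h0 => [/eqP <-|/hc ->]; first by rewrite mul0r.
  by rewrite subrr mulr0.
case: (hiso v) => u hu.
have := hc _ _ hu; rewrite !hx !mxE eqxx /=.
case: eqP => [huv|_] /=; last by move/eqP; rewrite oner_eq0.
by move=> _; move: hu; rewrite huv; case: hG => _ [-> _]; rewrite ltxx.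
Qed.

Lemma D_pos (R : realFieldType) (n : nat) (A : 'M[R]_n) (hG : weighted_graph A)
  (x : 'cV[R]_n) : ~ (forall u w, 0 < A u w -> x u 0 = x w 0) ->
  0 < disagreement A x.
Proof.
case: hG => hs [hd h3] hc.
have hge : forall u w, 0 <= A u w * (x u 0 - x w 0) ^+ 2.
  by move=> u w; apply: mulr_ge0; [case/andP: (h3 u w)|apply: sqr_ge0].
have hin : forall u : 'I_n, 0 <= \sum_(w < n | (u < w)%N) A u w * (x u 0 - x w 0) ^+ 2.
  by move=> u; apply: sumr_ge0 => w _.
rewrite lt_def (sumr_ge0 _ (fun u _ => hin u)) andbT; apply/eqP => h0.
apply: hc.
have hz : forall u w : 'I_n, (u < w)%N -> A u w * (x u 0 - x w 0) ^+ 2 = 0.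
  move=> u w huw.
  have h1 := @psumr_eq0P _ _ _ _ (fun u _ => hin u) h0 u isT.
  have h2 := psumr_eq0P (P := fun w : 'I_n => (u < w)%N) (fun w _ => hge u w) h1.
  exact: (h2 w huw).
have hz2 : forall u w : 'I_n, (u < w)%N -> 0 < A u w -> x u 0 = x w 0.
  move=> u w huw hA; have := hz u w huw; move/eqP; rewrite mulf_eq0 sqrf_eq0 subr_eq0.
  by rewrite (gt_eqF hA) /= => /eqP.
move=> u w hA; case: (ltngtP u w) => huw.
- exact: hz2.
- by apply/esym/hz2; rewrite // hs.
- by rewrite (val_inj huw).
Qed.

Lemma P_pos (R : realFieldType) (n : nat) (A : 'M[R]_n)
  (x : 'cV[R]_n) : ~ (forall u w, 0 < A u w -> x u 0 = x w 0) ->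
  0 < polarization x.
Proof.
move=> hc.
have hge : forall u : 'I_n, 0 <= (x u 0 - (\sum_(u0 < n) x u0 0) / n%:R) ^+ 2.
  by move=> u; apply: sqr_ge0.
rewrite lt_def (sumr_ge0 _ (fun u _ => hge u)) andbT; apply/eqP => h0.
apply: hc => u w _.
have hz : forall u, x u 0 = (\sum_(u0 < n) x u0 0) / n%:R.
  move=> i; have := @psumr_eq0P _ _ _ _ (fun u _ => hge u) h0 i isT.
  by move/eqP; rewrite sqrf_eq0 subr_eq0 => /eqP.
by rewrite !hz.
Qed.

Theorem theorem1p1 (R : realFieldType) (n : nat) (A : 'M[R]_n)
  (hG : weighted_graph A) (hiso : no_isolated A)
  (s : 'cV[R]_n) (hs : in01 s) (k : nat) (alpha beta : R)
  (halpha : 0 <= alpha) (hbeta : 0 <= beta) (hab : alpha != 0 \/ beta != 0)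
  (s' : 'cV[R]_n) (hfeas : feasible s k s')
  (hmax : forall s'' : 'cV[R]_n, feasible s k s'' ->
            objective A alpha beta s'' <= objective A alpha beta s') :
  forall v : 'I_n, s' v 0 != s v 0 -> s' v 0 = 0 \/ s' v 0 = 1.
Proof.
move=> v hv.
case: hfeas => hin hl0.
case: (eqVneq (s' v 0) 0) => [->|h0]; first by left.
case: (eqVneq (s' v 0) 1) => [->|h1]; first by right.
exfalso.
have /andP [ha0 ha1] := hin v.
have ha0' : 0 < s' v 0 by rewrite lt_def h0.
have ha1' : s' v 0 < 1 by rewrite lt_neqAle h1.
set e : 'cV[R]_n := delta_mx v 0.
have feas : forall t, 0 <= s' v 0 + t <= 1 -> feasible s k (s' + t *: e).
  move=> t /andP [ht0 ht1]; split.
    move=> w; rewrite addsE mxE /=; case: eqP => [->|_] /=.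
      by rewrite mulr1 ht0 ht1.
    by rewrite mulr0 addr0; apply: hin.
  apply: leq_trans hl0; apply: subset_leq_card; apply/subsetP => w.
  rewrite !inE; case: (eqVneq w v) => [->|hwv]; first by rewrite hv.
  by rewrite addsE mxE (negbTE hwv) /= mulr0 addr0.
set d := Num.min (s' v 0) (1 - s' v 0).
have hd0 : 0 < d by rewrite /d lt_min ha0' subr_gt0 ha1'.
have hd1 : d <= s' v 0 by rewrite /d ge_min lexx.
have hd2 : d <= 1 - s' v 0 by rewrite /d ge_min lexx orbT.
have f1 := hmax _ (feas d ltac:(apply/andP; split; lra)).
have f2 := hmax _ (feas (- d) ltac:(apply/andP; split; lra)).
have hp := @obj_par _ _ A alpha beta s' e d.
set x := equilibrium A e in hp.
have hk := @key _ _ A hG hiso v.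
have hD := @D_pos _ _ A hG x hk.
have hP := @P_pos _ _ A x hk.
have hc : 0 < alpha * disagreement A x + beta * polarization x.
  case: hab => hab.
    have : 0 < alpha * disagreement A x by rewrite mulr_gt0 // lt_def hab.
    have : 0 <= beta * polarization x by rewrite mulr_ge0 // ltW.
    lra.
  have : 0 < beta * polarization x by rewrite mulr_gt0 // lt_def hab.
  have : 0 <= alpha * disagreement A x by rewrite mulr_ge0 // ltW.
  lra.
have hd : 0 < d ^+ 2 by rewrite exprn_gt0.
have : 0 < d ^+ 2 * (alpha * disagreement A x + beta * polarization x) by rewrite mulr_gt0.
move: hp f1 f2.
set c := alpha * disagreement A x + beta * polarization x.
set o1 := objective _ _ _ (_ + d *: _).
set o2 := objective _ _ _ (_ + (- d) *: _).
set o := objective _ _ _ s'.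
move=> hp f1 f2 hpos.
have : 2 * o + 2 * d ^+ 2 * c <= 2 * o by rewrite -hp; lra.
rewrite -mulrA; lra.
Qed.
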